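(* There is a deterministic Congested Clique algorithm which computes a proper $O(a^2)$-vertex-coloring of an input graph $G$ with arboricity $a\ge 2$ within $O(\log a+\log^* n)$ rounds.
   Context: Congested Clique model: there are $n$ processors (vertices) with distinct IDs of $O(\log n)$ bits; computation proceeds in synchronous rounds; in each round every pair of vertices may exchange a message of $O(\log n)$ bits; local computation is free. The input is a graph $G=(V,E')$ on the same vertex set; each vertex initially knows its incident edges in $G$, and $a$ is known to all vertices. The arboricity of a graph is the minimum number of forests whose union covers its edge set. A proper $k$-coloring is a map $\varphi:V\to\{1,\dots,k\}$ with $\varphi(u)\ne\varphi(v)$ for every edge $\{u,v\}$. $\log^* n$ is the number of times $\log_2$ must be iterated starting from $n$ until the value is below $2$. *)

(* Defs.v *)
From mathcomp Require Import all_boot.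
Set Implicit Arguments. Unset Strict Implicit. Unset Printing Implicit Defensive.

Definition simple_graph (n : nat) (G : rel 'I_n) : Prop :=
  (forall u v, G u v = G v u) /\ (forall v, ~~ G v v).

Definition subgraph (n : nat) (F G : rel 'I_n) : Prop :=
  forall u v, F u v -> G u v.

Definition forest (n : nat) (F : rel 'I_n) : Prop :=
  simple_graph F /\
  ~ (exists p : seq 'I_n, [&& uniq p, 3 <= size p & cycle F p]).

Definition covered_by_forests (n : nat) (G : rel 'I_n) (k : nat) : Prop :=
  exists F : 'I_k -> rel 'I_n,
    (forall i, forest (F i) /\ subgraph (F i) G) /\
    (forall u v, G u v -> exists i, F i u v).

Definition has_arboricity (n : nat) (G : rel 'I_n) (a : nat) : Prop :=
  covered_by_forests G a /\ forall k, k < a -> ~ covered_by_forests G k.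

(* floor(log2 m) (0 for m <= 1) *)
Definition log2 (m : nat) : nat := trunc_log 2 m.

Fixpoint log_star_fuel (fuel m : nat) : nat :=
  match fuel with
  | 0 => 0
  | fuel'.+1 => if m < 2 then 0 else (log_star_fuel fuel' (log2 m)).+1
  end.

Definition log_star (m : nat) : nat := log_star_fuel m m.

(* Processors are the vertices 'I_n; the index of a vertex serves as its
   (distinct, O(log n)-bit) ID and as the address of its communication link.
   Local computation is free, so the local state of a vertex is its full
   knowledge: n, a, its own ID, its incident edges (neighbour indicator), and
   the transcript of all messages received so far (one vector per round,
   indexed by sender). *)
Definition transcript (n : nat) := seq ('I_n -> seq bool).

Record cc_algorithm := CCAlgorithm {
  cc_msg : forall n : nat, nat -> 'I_n -> ('I_n -> bool) -> transcript n ->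
           'I_n -> seq bool;
  cc_out : forall n : nat, nat -> 'I_n -> ('I_n -> bool) -> transcript n -> nat;
  cc_rounds : nat -> nat -> nat
}.

Definition cc_bandwidth (A : cc_algorithm) (B : nat) : Prop :=
  forall n a v N h u, size (@cc_msg A n a v N h u) <= B * (log2 n).+1.

Fixpoint cc_hist (A : cc_algorithm) (n a : nat) (G : rel 'I_n) (t : nat)
  : 'I_n -> transcript n :=
  match t with
  | 0 => fun _ => [::]
  | t'.+1 => fun v =>
      rcons (cc_hist A a G t' v)
            (fun u => @cc_msg A n a u (G u) (cc_hist A a G t' u) v)
  end.

Definition cc_output (A : cc_algorithm) (n a : nat) (G : rel 'I_n) (v : 'I_n)
  : nat :=
  @cc_out A n a v (G v) (cc_hist A a G (cc_rounds A n a) v).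

Definition proper_coloring (n : nat) (G : rel 'I_n) (k : nat)
  (phi : 'I_n -> nat) : Prop :=
  (forall v, phi v < k) /\ (forall u v, G u v -> phi u != phi v).

(* Main.v *)
Require Import Defs.
From mathcomp Require Import all_boot zify.
Set Implicit Arguments. Unset Strict Implicit. Unset Printing Implicit Defensive.

Fixpoint enc (W x : nat) : seq bool :=
  if W is W'.+1 then odd x :: enc W' x./2 else [::].
Fixpoint dec (s : seq bool) : nat :=
  if s is b :: s' then b + (dec s').*2 else 0.

Lemma size_enc W x : size (enc W x) = W.
Proof. by elim: W x => [|W IH] x //=; rewrite IH. Qed.

Lemma dec_enc W x : x < 2 ^ W -> dec (enc W x) = x.
Proof.
elim: W x => [|W IH] x /=; first by rewrite expn0; case: x.
move=> Hx; rewrite IH ?odd_double_half //.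
rewrite expnS in Hx; rewrite -(ltn_pmul2l (isT : 0 < 2)).
apply: leq_ltn_trans Hx; rewrite -{2}(odd_double_half x) -muln2 mulnC; lia.
Qed.

Definition enc_list (W : nat) (l : seq nat) : seq bool := flatten (map (enc W) l).
Fixpoint dec_list_f (W fuel : nat) (s : seq bool) : seq nat :=
  if fuel is f.+1 then
    (if s is [::] then [::] else dec (take W s) :: dec_list_f W f (drop W s))
  else [::].
Definition dec_list W s := dec_list_f W (size s) s.

Lemma size_enc_list W l : size (enc_list W l) = W * size l.
Proof. elim: l => [|x l IH] /=; first by rewrite muln0. by rewrite size_cat IH size_enc mulnS. Qed.

Lemma dec_enc_list W l : 0 < W -> all (fun x => x < 2 ^ W) l ->
  dec_list W (enc_list W l) = l.
Proof.
move=> W0 Hall; rewrite /dec_list.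
have: size l <= size (enc_list W l) by rewrite size_enc_list leq_pmull.
elim: l Hall (size (enc_list W l)) => [|x l IH]; first by move=> _ [|f].
move=> /andP[Hx Hl] [|f] //= Hf.
rewrite /enc_list /= -/(enc_list W l).
case E: (enc W x ++ enc_list W l) => [|b s].
  by move: E; have [W' ->] : exists W', W = W'.+1 by exists W.-1; lia.
rewrite -E take_size_cat ?size_enc // drop_size_cat ?size_enc //.
by rewrite dec_enc // IH.
Qed.



Section Graph.
Variable n : nat.
Implicit Types (F G : rel 'I_n) (S : {set 'I_n}).

Definition deg F S (x : 'I_n) : nat := \sum_(z in S) F x z.
Definition cnt F S : nat := \sum_(y in S) deg F S y.

Lemma deg_card F S x : deg F S x = #|[set z in S | F x z]|.
Proof.
rewrite /deg -sum1_card [RHS]big_mkcond [LHS]big_mkcond /=.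
by apply: eq_bigr => z _; rewrite inE; case: (z \in S); case: (F x z).
Qed.

Lemma degD1 F S x y : x \in S -> deg F S y = F y x + deg F (S :\ x) y.
Proof.
move=> Hx; rewrite /deg (bigD1 x) //=; congr addn.
by apply: eq_bigl => z; rewrite in_setD1 andbC.
Qed.

Lemma cnt_peel F S x : (forall u v, F u v = F v u) -> x \in S ->
  cnt F S <= 2 * deg F S x + cnt F (S :\ x).
Proof.
move=> Fsym Hx; rewrite /cnt (bigD1 x) //=.
have -> : \sum_(i in S | i != x) deg F S i =
          \sum_(i in S :\ x) F i x + \sum_(i in S :\ x) deg F (S :\ x) i.
  rewrite -big_split /=; apply: eq_big => i; first by rewrite in_setD1 andbC.
  by move=> _; rewrite (degD1 _ _ Hx).
have : \sum_(i in S :\ x) F i x <= deg F S x.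
  rewrite (degD1 _ x Hx) /deg; under eq_bigr do rewrite Fsym.
  exact: leq_addl.
move=> H; rewrite [X in _ <= _ + X](_ : _ = \sum_(i in S :\ x) deg F (S :\ x) i) //; lia.
Qed.

Lemma cyc_of F x q z1 z2 :
  (forall v, ~~ F v v) -> (forall u v, F u v = F v u) ->
  uniq (x :: q) -> path F x q ->
  z1 \in x :: q -> z2 \in x :: q -> z1 != z2 ->
  F (last x q) z1 -> F (last x q) z2 ->
  exists p : seq 'I_n, [&& uniq p, 3 <= size p & cycle F p].
Proof.
move=> Firr Fsym Hu Hp.
wlog Hlt : z1 z2 / index z1 (x :: q) < index z2 (x :: q).
  move=> Hw H1 H2 H12 F1 F2.
  case: (ltngtP (index z1 (x::q)) (index z2 (x::q))) => Hi.
  - exact: Hw Hi H1 H2 H12 F1 F2.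
  - by apply: (Hw z2 z1 Hi H2 H1 _ F2 F1); rewrite eq_sym.
  - by move: H12; rewrite -(nth_index z1 H1) Hi nth_index ?eqxx.
move=> H1 H2 H12 F1 F2.
set s := x :: q in Hu Hlt H1 H2.
have [s1 [s2 Es]] : exists s1 s2, s = s1 ++ z1 :: s2.
  exists (take (index z1 s) s), (drop (index z1 s).+1 s).
  by rewrite -{1}(cat_take_drop (index z1 s) s) (drop_nth z1) ?nth_index ?index_mem.
have [Ey Pz] : last x q = last z1 s2 /\ path F z1 s2.
  rewrite /s in Es; case: s1 Es Hp => [|x' s1] /= [Ex Eq]; rewrite Ex Eq //.
  by rewrite cat_path /= last_cat /= => /and3P[_ _ ->].
have Hu2 : uniq (z1 :: s2) by move: Hu; rewrite Es cat_uniq => /and3P[].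
have z1s1 : z1 \notin s1.
  move: Hu; rewrite Es cat_uniq => /and3P[_ /hasPn H _]; apply/negP=> Hin.
  by have := H z1; rewrite inE eqxx /= Hin => /(_ isT).
have z2s2 : z2 \in s2.
  move: H2 Hlt; rewrite Es !index_cat (negbTE z1s1) /= eqxx addn0 mem_cat.
  case: ifP => [Hz2 _|_ /= ].
    by rewrite ltnNge ltnW // index_mem.
  by rewrite inE eq_sym (negbTE H12).
have yz1 : last z1 s2 != z1 by apply/eqP => E; move: F1; rewrite Ey E (negbTE (Firr z1)).
have ys2 : last z1 s2 \in s2.
  by have := mem_last z1 s2; rewrite inE (negbTE yz1).
have yz2 : last z1 s2 != z2 by apply/eqP => E; move: F2; rewrite Ey E (negbTE (Firr z2)).
exists (z1 :: s2); rewrite Hu2 /= ltnS.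
have -> : 2 <= size s2.
  have := uniq_leq_size (s1 := [:: last z1 s2; z2]) (s2 := s2).
  rewrite /= inE yz2 => /(_ isT); apply => w; rewrite !inE => /orP[]/eqP->//.
by rewrite rcons_path Pz -Ey.
Qed.

Lemma leaf F S : forest F -> S != set0 -> exists2 x, x \in S & deg F S x <= 1.
Proof.
move=> [[Fsym Firr] Fnc] /set0Pn [x0 Hx0].
case: (pickP (fun x => (x \in S) && (deg F S x <= 1))) => [x /andP[]|H]; first by exists x.
exfalso.
have H2 : forall y, y \in S -> 1 < #|[set z in S | F y z]|.
  by move=> y Hy; have := H y; rewrite Hy /= -deg_card ltnNge => ->.
suff: forall k x q, uniq (x :: q) -> all (mem S) (x :: q) -> path F x q ->
        n - size q <= k -> False.
  by move/(_ n x0 [::]); apply => //=; [rewrite andbT | rewrite subn0].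
elim=> [|k IH] x q Hu Hall Hp Hk.
all: have [z [Hzn HzS Hz]] : exists z, [/\ z \notin x :: q, z \in S & F (last x q) z].
all: try (have Hy : last x q \in S := allP Hall _ (mem_last x q);
   have /card_gt1P [z1 [z2 [Hz1 Hz2 H12]]] := H2 _ Hy;
   rewrite !inE in Hz1 Hz2; case/andP: Hz1 => S1 F1; case/andP: Hz2 => S2 F2;
   case E1: (z1 \in x :: q); last (by exists z1; rewrite E1);
   case E2: (z2 \in x :: q); last (by exists z2; rewrite E2);
   exfalso; have [p Hp'] := cyc_of Firr Fsym Hu Hp E1 E2 H12 F1 F2; apply: Fnc; by exists p).
all: have Hu' : uniq (x :: rcons q z) by rewrite -rcons_cons rcons_uniq Hzn Hu.
- have H4 : #|x :: rcons q z| <= n by rewrite -[n in _ <= n]card_ord max_card.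
  move: H4; rewrite (card_uniqP Hu') /= size_rcons; move: Hk; rewrite /(size _) -/(size _); set k := size q; lia.
- apply: (IH x (rcons q z)) => //.
  + by rewrite -rcons_cons all_rcons Hall andbT.
  + by rewrite rcons_path Hp Hz.
  + rewrite size_rcons; lia.
Qed.

Lemma cnt_forest F S : forest F -> cnt F S <= 2 * #|S|.
Proof.
move=> HF; move Hk : #|S| => k; elim: k S Hk => [|k IH] S Hk.
  by rewrite (cards0_eq Hk) /cnt big_set0.
have SN : S != set0 by apply/eqP => E; rewrite E cards0 in Hk.
have [x Hx Hd] := leaf HF SN.
have := cnt_peel HF.1.1 Hx.
move: Hk; rewrite (cardsD1 x S) Hx add1n => -[] Hk.
have := IH (S :\ x) Hk; lia.
Qed.

Lemma cnt_arb G a S : covered_by_forests G a -> cnt G S <= 2 * a * #|S|.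
Proof.
move=> [F [HF Hcov]].
apply: (@leq_trans (\sum_(i < a) cnt (F i) S)).
  apply: (@leq_trans (\sum_(y in S) \sum_(z in S) \sum_(i < a) (F i y z : nat))).
    apply: leq_sum => y _; apply: leq_sum => z _.
    case Gyz: (G y z) => //; have [i Hi] := Hcov _ _ Gyz.
    by rewrite (bigD1 i) //= Hi.
  under eq_bigr do rewrite exchange_big.
  by rewrite exchange_big.
apply: (@leq_trans (\sum_(i < a) 2 * #|S|)).
  by apply: leq_sum => i _; apply: cnt_forest; case: (HF i).
rewrite sum_nat_const card_ord; set s := #|S|; lia.
Qed.

Lemma mindeg G a S : covered_by_forests G a -> S != set0 ->
  exists2 x, x \in S & deg G S x <= 2 * a.
Proof.
move=> Hcov SN.
case: (pickP (fun x => (x \in S) && (deg G S x <= 2 * a))) => [x /andP[]|H]; first by exists x.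
exfalso.
have : #|S| * (2 * a).+1 <= cnt G S.
  rewrite -sum_nat_const; apply: leq_sum => y Hy; have := H y; rewrite Hy /= ltnNge => ->.
  done.
have := cnt_arb S Hcov; have : 0 < #|S| by rewrite card_gt0.
nia.
Qed.
End Graph.


Definition mex (s : seq nat) : nat := find (fun m => m \notin s) (iota 0 (size s).+1).

Lemma mex_spec s : mex s \notin s /\ mex s <= size s.
Proof.
have Hh : has (fun m => m \notin s) (iota 0 (size s).+1).
  case: (boolP (has _ _)) => // /hasPn H; exfalso.
  have := uniq_leq_size (iota_uniq 0 (size s).+1) (fun x Hx => negbNE (H x Hx)).
  by rewrite size_iota ltnn.
split.
- have Hf := Hh; rewrite has_find size_iota in Hf.
  by have := nth_find 0 Hh; rewrite /mex nth_iota.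
- by have := Hh; rewrite has_find size_iota /mex ltnS.
Qed.

Section Col.
Variable n : nat.

Fixpoint gcol (E : rel 'I_n) (D k : nat) (S : {set 'I_n}) : 'I_n -> nat :=
  if k is k'.+1 then
    if [pick x in S | deg E S x <= D] is Some x then
      fun y => if y == x then
                 mex [seq gcol E D k' (S :\ x) z | z <- enum [set z in S :\ x | E x z]]
               else gcol E D k' (S :\ x) y
    else fun _ => 0
  else fun _ => 0.

Lemma gcol_ok (E : rel 'I_n) (D : nat) : (forall u v, E u v = E v u) -> (forall v, ~~ E v v) ->
  forall k (S : {set 'I_n}), #|S| <= k ->
  (forall S' : {set 'I_n}, S' \subset S -> S' != set0 -> exists2 x, x \in S' & deg E S' x <= D) ->
  (forall y, y \in S -> gcol E D k S y <= D /\ gcol E D k S y < #|S|) /\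
  (forall x y, x \in S -> y \in S -> E x y -> gcol E D k S x != gcol E D k S y).
Proof.
move=> Esym Eirr; elim=> [|k IH] S Hk Hdeg.
  have S0 : S = set0 by apply: cards0_eq; move: Hk; rewrite leqn0 => /eqP.
  by rewrite S0; split=> [y|x y]; rewrite in_set0.
rewrite /=; case: pickP => [x /andP [Hx Hxd] | Hn]; last first.
  have S0 : S = set0.
    apply/eqP; apply/negPn/negP => SN; have [x Hx Hd] := Hdeg S (subxx S) SN.
    by have := Hn x; rewrite Hx Hd.
  by rewrite S0; split=> [y|x y]; rewrite in_set0.
have HcS : #|S| = (#|S :\ x|).+1 by rewrite (cardsD1 x S) Hx.
have Hk' : #|S :\ x| <= k by move: Hk; rewrite HcS.
have Hdeg' : forall S' : {set 'I_n}, S' \subset S :\ x -> S' != set0 ->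
    exists2 x, x \in S' & deg E S' x <= D.
  move=> S' HS' SN; apply: Hdeg SN; apply: subset_trans HS' _; exact: subsetDl.
have [IH1 IH2] := IH _ Hk' Hdeg'.
set c := gcol E D k (S :\ x).
set L := [seq c z | z <- enum [set z in S :\ x | E x z]].
have [Hm1 Hm2] := mex_spec L.
have HL1 : size L <= deg E S x.
  rewrite size_map -cardE deg_card; apply: subset_leq_card; apply/subsetP => z.
  by rewrite !inE => /andP[/andP[_ ->] ->].
have HL2 : size L <= #|S :\ x|.
  rewrite size_map -cardE; apply: subset_leq_card; apply/subsetP => z.
  by rewrite !inE => /andP[-> _].
have memL : forall z, z \in S :\ x -> E x z -> c z \in L.
  by move=> z Hz Exz; apply: map_f; rewrite mem_enum inE Hz Exz.
split.
  move=> y Hy; case: (eqVneq y x) => [Eyx|Hyx].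
    split; first by apply: leq_trans Hxd; apply: leq_trans Hm2 _.
    by rewrite HcS ltnS; apply: leq_trans Hm2 _.
  have Hy' : y \in S :\ x by rewrite in_setD1 Hyx Hy.
  by have [H1 H2] := IH1 _ Hy'; split => //; rewrite HcS ltnW.
move=> u v Hu Hv Euv.
case: (eqVneq u x) => [Eu|Hux]; case: (eqVneq v x) => [Ev|Hvx].
- by move: Euv; rewrite Eu Ev (negbTE (Eirr x)).
- subst u; apply/eqP => E1.
  have Hv' : v \in S :\ x by rewrite in_setD1 Hvx Hv.
  by move: Hm1; rewrite E1 (memL _ Hv' Euv).
- subst v; apply/eqP => E1.
  have Hu' : u \in S :\ x by rewrite in_setD1 Hux Hu.
  by move: Hm1; rewrite -E1 (memL _ Hu'); rewrite // Esym.
- apply: IH2 => //.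
  + by rewrite in_setD1 Hux Hu.
  + by rewrite in_setD1 Hvx Hv.
Qed.
End Col.


Lemma tele (Q P : pred nat) (f : nat -> nat) m :
  \sum_(0 <= i < m | Q i) count P (iota (\sum_(0 <= x < i | Q x) f x) (f i)) =
  count P (iota 0 (\sum_(0 <= x < m | Q x) f x)).
Proof.
have E1 : forall (g : nat -> nat) k, \sum_(0 <= i < k.+1 | Q i) g i =
    \sum_(0 <= i < k | Q i) g i + (if Q k then g k else 0).
  by move=> g k; rewrite big_mkcond big_nat_recr //= -big_mkcond.
elim: m => [|m IH]; first by rewrite !big_geq.
rewrite E1 IH E1; case: (Q m); last by rewrite !addn0.
by rewrite iotaD count_cat add0n.
Qed.

Lemma count_mod_le m r M : 0 < m ->
  count (fun j => j %% m == r) (iota 0 M) <= M %/ m + 1.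
Proof.
move=> m0; rewrite -size_filter.
set s := filter _ _.
have Us : uniq s by rewrite filter_uniq // iota_uniq.
have Um : uniq (map (divn^~ m) s).
  rewrite map_inj_in_uniq // => j k; rewrite !mem_filter => /andP[/eqP Hj _] /andP[/eqP Hk _] E.
  by rewrite (divn_eq j m) (divn_eq k m) /= E Hj Hk.
have := uniq_leq_size Um (s2 := iota 0 (M %/ m).+1).
rewrite size_map size_iota addn1; apply => z /mapP [j]; rewrite mem_filter mem_iota => /andP[_ /andP[_ Hj]] ->.
by rewrite mem_iota /= ltnS leq_div2r // ltnW.
Qed.

Lemma size_le1 (T : eqType) (s : seq T) : uniq s -> {in s &, forall x y, x = y} -> size s <= 1.
Proof.
case: s => [|x [|y s]] //= /andP[Hx _] H.
by move: Hx; rewrite (H x y) ?inE ?eqxx ?orbT.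
Qed.

Definition Wd (n : nat) := (log2 n).+1.

Definition nbset n a (v : 'I_n) (N : 'I_n -> bool) : {set 'I_n} :=
  [set z | N z && (z %% a == v %% a)].
Definition nb n a (v : 'I_n) N := enum (nbset a v N).

Definition R1 n a (v : 'I_n) N : seq bool := enc_list (Wd n) [:: #|nbset a v N| ].

Definition D1 n (m1 : 'I_n -> seq bool) (x : nat) : nat :=
  match (insub x : option 'I_n) with
  | Some o => head 0 (dec_list (Wd n) (m1 o))
  | None => 0 end.

Definition tpos n a (m1 : 'I_n -> seq bool) (v : 'I_n) : nat :=
  \sum_(0 <= x < v | x %% a == v %% a) D1 m1 x.

Definition l2 n a (v : 'I_n) N m1 (w : 'I_n) : seq nat :=
  take 1 [seq val (nth v (nb a v N) i) | i <- iota 0 (size (nb a v N)) &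
                                          (tpos a m1 v + i) %% n == w].

Definition R2 n a (v : 'I_n) N m1 w : seq bool := enc_list (Wd n) (l2 a v N m1 w).

Definition L3 n a (m2 : 'I_n -> seq bool) (p : 'I_n) : seq nat :=
  flatten [seq [seq val v * n + u | u <- dec_list (Wd n) (m2 v)] | v : 'I_n <- enum 'I_n & v %% a == val p].

Definition R3 n a (m2 : 'I_n -> seq bool) (p : 'I_n) : seq bool :=
  enc_list (2 * Wd n) (take 5 (L3 a m2 p)).

Definition Ep n (m3 : 'I_n -> seq bool) : rel 'I_n :=
  fun x y => [exists w : 'I_n, (val x * n + val y) \in dec_list (2 * Wd n) (m3 w)].

Definition Vp n a (p : nat) : {set 'I_n} := [set x : 'I_n | x %% a == p].

Definition R4 n a (p : 'I_n) (m3 : 'I_n -> seq bool) (v : 'I_n) : seq bool :=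
  enc_list (Wd n) [:: gcol (Ep m3) (2 * a) n (Vp n a p) v].

Definition node n a (v : 'I_n) : 'I_n := Ordinal (leq_ltn_trans (leq_mod v a) (ltn_ord v)).

Definition alg_msg n a (v : 'I_n) (N : 'I_n -> bool) (h : transcript n) (u : 'I_n) : seq bool :=
  match h with
  | [::] => R1 a v N
  | [:: m1] => R2 a v N m1 u
  | [:: _; m2] => R3 a m2 u
  | [:: _; _; m3] => R4 a v m3 u
  | _ => [::] end.

Definition alg_out n a (v : 'I_n) (N : 'I_n -> bool) (h : transcript n) : nat :=
  match h with
  | [:: _; _; _; m4] => head 0 (dec_list (Wd n) (m4 (node a v))) * a + v %% a
  | _ => 0 end.

Definition Alg : cc_algorithm := CCAlgorithm alg_msg alg_out (fun _ _ => 4).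

Arguments enc_list : simpl never.
Lemma Alg_bandwidth : cc_bandwidth Alg 10.
Proof.
move=> n a v N h u; rewrite -/(Wd n).
case: h => [|m1 [|m2 [|m3 [|m4 [|? ?]]]]]; cbn [cc_msg Alg alg_msg].
- by rewrite /R1 size_enc_list /= muln1; apply: leq_pmull.
- rewrite /R2 size_enc_list /l2; apply: (@leq_trans (Wd n * 1)).
    by apply: leq_mul => //; rewrite size_take; case: ifP => //; move/negbT; rewrite -leqNgt.
  by rewrite muln1 leq_pmull.
- rewrite /R3 size_enc_list; apply: (@leq_trans (2 * Wd n * 5)).
    by apply: leq_mul => //; rewrite size_take; case: ifP => //; move/negbT; rewrite -leqNgt.
  by rewrite mulnC mulnA.
- by rewrite /R4 size_enc_list /= muln1; apply: leq_pmull.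
- by [].
- by [].
Qed.


Lemma pair_inj n x y v u : y < n -> u < n -> x * n + y = v * n + u -> x = v /\ y = u.
Proof.
move=> Hy Hu E.
have n0 : 0 < n by apply: leq_ltn_trans Hy.
have := congr1 (divn^~ n) E; have := congr1 (modn^~ n) E.
rewrite /= !modnMDl !modn_small // !divnMDl // !divn_small // !addn0 => -> ->; done.
Qed.

Section Main.
Variables (n a : nat) (G : rel 'I_n).
Hypothesis Gsym : forall u v, G u v = G v u.
Hypothesis Girr : forall v, ~~ G v v.
Hypothesis Gcov : covered_by_forests G a.
Hypothesis a1 : 0 < a.

Definition M1 : 'I_n -> seq bool := fun u => R1 a u (G u).
Definition dg (v : 'I_n) := #|nbset a v (G v)|.
Definition M2 (w : 'I_n) : 'I_n -> seq bool := fun v => R2 a v (G v) M1 w.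
Definition M3 (p : 'I_n) : 'I_n -> seq bool := fun w => R3 a (M2 w) p.
Definition M4 (v : 'I_n) : 'I_n -> seq bool := fun p => R4 a p (M3 p) v.

Lemma hist4 v : cc_hist Alg a G 4 v = [:: M1; M2 v; M3 v; M4 v].
Proof. reflexivity. Qed.

Lemma HW : n < 2 ^ Wd n.
Proof. exact: trunc_log_ltn. Qed.

Lemma dg_le v : dg v <= n.
Proof. by have := max_card (nbset a v (G v)); rewrite card_ord. Qed.

Lemma D1_M1 (v : 'I_n) : D1 M1 v = dg v.
Proof.
rewrite /D1 valK /M1 /R1 dec_enc_list //= andbT.
exact: leq_ltn_trans (dg_le v) HW.
Qed.

Lemma size_nb v : size (nb a v (G v)) = dg v.
Proof. by rewrite /nb /dg cardE. Qed.

Notation tv v := (tpos a M1 v).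

Lemma filt_le1 (v w : 'I_n) :
  size [seq i <- iota 0 (size (nb a v (G v))) | (tv v + i) %% n == w] <= 1.
Proof.
apply: size_le1; first by rewrite filter_uniq // iota_uniq.
move=> x y; rewrite !mem_filter !mem_iota /= size_nb => /andP[/eqP Hx Hxl] /andP[/eqP Hy Hyl].
have Hxn : x < n by apply: leq_trans Hxl (dg_le v).
have Hyn : y < n by apply: leq_trans Hyl (dg_le v).
have : (tv v + x == tv v + y %[mod n]) by rewrite Hx Hy.
by rewrite eqn_modDl !modn_small // => /eqP.
Qed.

Lemma l2_full (v w : 'I_n) : l2 a v (G v) M1 w =
  [seq val (nth v (nb a v (G v)) i) | i <- iota 0 (size (nb a v (G v))) & (tv v + i) %% n == w].
Proof. by rewrite /l2 take_oversize // size_map filt_le1. Qed.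

Lemma l2_lt (v w : 'I_n) u : u \in l2 a v (G v) M1 w -> u < n.
Proof. by rewrite l2_full => /mapP [i _ ->]; apply: ltn_ord. Qed.

Lemma l2_dec (w v : 'I_n) : dec_list (Wd n) (M2 w v) = l2 a v (G v) M1 w.
Proof.
rewrite /M2 /R2 dec_enc_list //; apply/allP => u /l2_lt Hu.
exact: ltn_trans Hu HW.
Qed.

Lemma mem_l2 (v w y : 'I_n) : val y \in l2 a v (G v) M1 w -> y \in nbset a v (G v).
Proof.
rewrite l2_full => /mapP [i]; rewrite mem_filter mem_iota => /andP[_ /andP[_ Hi]] /val_inj ->.
by rewrite -mem_enum; apply: mem_nth.
Qed.

Lemma l2_mem (v y : 'I_n) : y \in nbset a v (G v) -> exists w, val y \in l2 a v (G v) M1 w.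
Proof.
move=> Hy.
have n0 : 0 < n by apply: leq_ltn_trans (ltn_ord v).
have Hy' : y \in nb a v (G v) by rewrite mem_enum.
exists (Ordinal (ltn_pmod (tv v + index y (nb a v (G v))) n0)).
rewrite l2_full; apply/mapP; exists (index y (nb a v (G v))); last by rewrite nth_index.
by rewrite mem_filter mem_iota /= index_mem Hy' eqxx.
Qed.

Lemma L3_eq (w p : 'I_n) : L3 a (M2 w) p =
  flatten [seq [seq val v * n + u | u <- l2 a v (G v) M1 w] | v : 'I_n <- enum 'I_n & v %% a == val p].
Proof. by rewrite /L3; congr flatten; apply: eq_map => v; rewrite l2_dec. Qed.

Lemma mem_L3 (w p x y : 'I_n) :
  (val x * n + val y \in L3 a (M2 w) p) = (x %% a == val p) && (val y \in l2 a x (G x) M1 w).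
Proof.
rewrite L3_eq; apply/flattenP/andP.
  move=> [s /mapP [v Hv ->] /mapP [u Hu E]].
  have [Exv Eyu] := pair_inj (ltn_ord y) (l2_lt Hu) E.
  have -> : x = v by apply: val_inj.
  have Eyu' : val y = u := Eyu.
  by move: Hv; rewrite mem_filter => /andP[-> _]; rewrite Eyu'.
move=> [Hx Hy]; exists [seq val x * n + u | u <- l2 a x (G x) M1 w].
  by apply: map_f; rewrite mem_filter Hx mem_enum.
exact: map_f.
Qed.

Lemma size_l2 (v w : 'I_n) :
  size (l2 a v (G v) M1 w) = count (fun j => j %% n == w) (iota (tv v) (dg v)).
Proof.
rewrite l2_full size_map size_filter size_nb.
rewrite (_ : iota (tv v) (dg v) = map (addn (tv v)) (iota 0 (dg v))); last by rewrite -iotaDl addn0.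
by rewrite count_map.
Qed.

Lemma sum_L3 (w p : 'I_n) : size (L3 a (M2 w) p) =
  \sum_(v <- enum 'I_n | v %% a == val p) size (l2 a v (G v) M1 w).
Proof.
rewrite L3_eq size_flatten /shape sumnE !big_map big_filter -enumT.
by apply: eq_bigr => v _; rewrite size_map.
Qed.

Lemma M_bound (p : nat) : 0 < n ->
  \sum_(0 <= x < n | x %% a == p) D1 M1 x < 5 * n.
Proof.
move=> n0; set M := \sum_(0 <= x < n | _) _.
have EM : M = \sum_(v in Vp n a p) dg v.
  rewrite /M big_mkord; apply: eq_big => v; first by rewrite inE.
  by move=> _; rewrite D1_M1.
have Hc : #|Vp n a p| <= n %/ a + 1.
  have -> : #|Vp n a p| = count (fun j => j %% a == p) (iota 0 n).
    rewrite -sum1_card (_ : \sum_(i in Vp n a p) 1 = \sum_(i < n | i %% a == p) 1).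
      by rewrite -(big_mkord (fun i => i %% a == p) (fun _ => 1)) sum1_count /index_iota subn0.
    by apply: eq_bigl => i; rewrite inE.
  exact: count_mod_le.
have H1 : M <= 2 * a * #|Vp n a p|.
  rewrite EM; apply: leq_trans (cnt_arb _ Gcov); apply/eq_leq/eq_bigr => v Hv.
  rewrite /dg deg_card; apply: eq_card => z; rewrite !inE.
  by move: Hv; rewrite inE => /eqP ->; rewrite andbC.
have H2 : M <= n * #|Vp n a p|.
  rewrite EM mulnC -sum_nat_const; apply: leq_sum => v _; exact: dg_le.
have Hq := leq_divM n a.
case: (leqP a n) => Han.
  have H3 : 2 * a * #|Vp n a p| <= 2 * a * (n %/ a + 1) by rewrite leq_mul2l Hc orbT.
  move: H1 H3 Hq Han n0; set c := #|Vp n a p|; set q := n %/ a; nia.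
move: Hc H2; rewrite divn_small // add0n; set c := #|Vp n a p|; nia.
Qed.

Lemma L3_size (w p : 'I_n) : size (L3 a (M2 w) p) <= 5.
Proof.
have n0 : 0 < n by apply: leq_ltn_trans (ltn_ord w).
set P := fun j => j %% n == val w.
have -> : size (L3 a (M2 w) p) = \sum_(0 <= i < n | i %% a == val p)
    count P (iota (\sum_(0 <= x < i | x %% a == val p) D1 M1 x) (D1 M1 i)).
  rewrite sum_L3.
  rewrite (_ : \sum_(0 <= i < n | i %% a == val p) _ =
               \sum_(i <- map val (enum 'I_n) | i %% a == val p)
                 count P (iota (\sum_(0 <= x < i | x %% a == val p) D1 M1 x) (D1 M1 i))); last first.
    by rewrite val_enum_ord /index_iota subn0.
  rewrite big_map; apply: eq_bigr => v /eqP Hv.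
  rewrite size_l2 D1_M1 /tpos; congr (count _ (iota _ _)).
  by apply: eq_bigl => x; rewrite Hv.
rewrite tele; rewrite /P; apply: leq_trans (@count_mod_le n (val w) _ n0) _.
have := M_bound (val p) n0; set M := \sum_(0 <= x < n | _) _.
rewrite -ltn_divLR // => H; lia.
Qed.

Lemma decL3 (w p : 'I_n) : dec_list (2 * Wd n) (M3 p w) = L3 a (M2 w) p.
Proof.
rewrite /M3 /R3 take_oversize ?L3_size // dec_enc_list //.
apply/allP => z; rewrite L3_eq => /flattenP [s /mapP [v _ ->] /mapP [u Hu ->]].
have Hun := l2_lt Hu; have Hv := ltn_ord v; have HWn := HW.
have Hv' : val v < n := Hv; rewrite mul2n -addnn expnD; move: Hun Hv' HWn; set X := 2 ^ Wd n; set y := val v; nia.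
Qed.

Lemma Ep_eq (p x y : 'I_n) :
  Ep (M3 p) x y = G x y && (x %% a == val p) && (y %% a == val p).
Proof.
rewrite /Ep; apply/existsP/idP => [[w]|H].
  rewrite decL3 mem_L3 => /andP[Hx /mem_l2]; rewrite inE => /andP[Gxy Hy].
  by rewrite Gxy Hx (eqP Hy) Hx.
case/andP: H => /andP[Gxy Hx] Hy.
have Hn : y \in nbset a x (G x) by rewrite inE Gxy (eqP Hy) (eqP Hx) eqxx.
have [w Hw] := l2_mem Hn; exists w; by rewrite decL3 mem_L3 Hx.
Qed.

Definition col (p : 'I_n) := gcol (Ep (M3 p)) (2 * a) n (Vp n a p).

Lemma col_ok (p : 'I_n) :
  (forall y, y \in Vp n a p -> col p y <= 2 * a /\ col p y < #|Vp n a p|) /\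
  (forall x y, x \in Vp n a p -> y \in Vp n a p -> G x y -> col p x != col p y).
Proof.
have Esym : forall u v, Ep (M3 p) u v = Ep (M3 p) v u.
  move=> u v; rewrite !Ep_eq Gsym.
  by case: (u %% a == p); case: (v %% a == p); rewrite ?andbF ?andbT.
have Eirr : forall v, ~~ Ep (M3 p) v v by move=> v; rewrite Ep_eq (negbTE (Girr v)).
have Hk : #|Vp n a p| <= n by have := max_card (Vp n a p); rewrite card_ord.
have Hdeg : forall S' : {set 'I_n}, S' \subset Vp n a p -> S' != set0 ->
    exists2 x, x \in S' & deg (Ep (M3 p)) S' x <= 2 * a.
  move=> S' HS SN; have [x Hx Hd] := mindeg Gcov SN; exists x => //.
  rewrite (_ : deg _ S' x = deg G S' x) // /deg; apply: eq_bigr => z Hz.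
  rewrite Ep_eq; have := subsetP HS _ Hx; have := subsetP HS _ Hz.
  by rewrite !inE => /eqP -> /eqP ->; rewrite eqxx !andbT.
have [H1 H2] := gcol_ok Esym Eirr Hk Hdeg.
split => // x y Hx Hy Gxy; apply: H2 => //.
by move: Hx Hy; rewrite Ep_eq Gxy !inE => /eqP -> /eqP ->; rewrite eqxx.
Qed.

Lemma out_eq v : cc_output Alg a G v = col (node a v) v * a + v %% a.
Proof.
rewrite /cc_output; change (cc_rounds Alg n a) with 4; rewrite hist4.
cbn [cc_out Alg alg_out]; rewrite /M4 /R4 dec_enc_list //= andbT.
have Hv : v \in Vp n a (node a v) by rewrite inE /= eqxx.
have [H1 _] := col_ok (node a v); have [_ Hc] := H1 _ Hv.
have Hk : #|Vp n a (node a v)| <= n by have := max_card (Vp n a (node a v)); rewrite card_ord.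
exact: (ltn_trans (leq_trans Hc Hk) HW).
Qed.
End Main.


Unset Implicit Arguments.

Theorem theorem3 :
  exists (A : cc_algorithm) (B C : nat),
    cc_bandwidth A B /\
    forall (n a : nat) (G : rel 'I_n),
      simple_graph G -> has_arboricity G a -> 2 <= a ->
      cc_rounds A n a <= C * (log2 a + log_star n) /\
      proper_coloring G (C * a ^ 2) (cc_output A a G).
Proof.
exists Alg, 10, 4; split; first exact: Alg_bandwidth.
move=> n a G [Gsym Girr] [Gcov _] a2.
have a1 : 0 < a by apply: leq_trans a2.
split.
  have := trunc_log_ltn a (isT : 1 < 2); rewrite -/(log2 a) /= => H.
  have : 1 <= log2 a.
    case E: (log2 a) => //; move: H; rewrite E expn1 => H; move: a2; rewrite leqNgt H.
    by [].
  move=> H0 /=; lia.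
split.
  move=> v; rewrite (out_eq Gsym Girr Gcov a1).
  have Hv : v \in Vp n a (node a v) by rewrite inE /= eqxx.
  have [H1 _] := col_ok Gsym Girr Gcov a1 (node a v); have [Hc _] := H1 _ Hv.
  have Hm : v %% a < a := ltn_pmod _ a1.
  move: Hc Hm; set c := col _ _ _ _; set r := v %% a; rewrite -mulnn; nia.
move=> u v Guv; rewrite !(out_eq Gsym Girr Gcov a1).
case: (eqVneq (u %% a) (v %% a)) => Huv.
  have En : node a u = node a v by apply: val_inj.
  have Hu : u \in Vp n a (node a v) by rewrite inE /= Huv.
  have Hv : v \in Vp n a (node a v) by rewrite inE /= eqxx.
  have [_ H2] := col_ok Gsym Girr Gcov a1 (node a v).
  rewrite En Huv eqn_add2r eqn_pmul2r //; exact: H2.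
apply/eqP => E; move/(congr1 (modn^~ a)): E; rewrite /= !modnMDl !modn_mod => E.
by move: Huv; rewrite E eqxx.
Qed.
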